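(* Let $n\in\mathbb{N}$, $r\in(0,+\infty)$, let $A$ be an Arens–Michael algebra and let $a=(a_1,\dots,a_n)\in A^n$ be strictly spectrally $r$-contractive. Then there exists a unique continuous homomorphism $\gamma_a:\mathcal{F}^T(\mathbb{D}_r^n)\to A$ with $\gamma_a(\zeta_i)=a_i$ for $i=1,\dots,n$. Conversely, for every continuous homomorphism $\varphi:\mathcal{F}^T(\mathbb{D}_r^n)\to A$, the tuple $(\varphi(\zeta_1),\dots,\varphi(\zeta_n))$ is strictly spectrally $r$-contractive. Hence $a\mapsto\gamma_a$ is a bijection (natural in $A$) from the set of strictly spectrally $r$-contractive $n$-tuples in $A^n$ onto the set of continuous homomorphisms $\mathcal{F}^T(\mathbb{D}_r^n)\to A$.
   Context: All algebras are unital, homomorphisms unital. An Arens–Michael algebra is a complete locally convex algebra whose topology is given by a family of submultiplicative seminorms. $W_n$ is the set of all finite words $\alpha=(\alpha_1,\dots,\alpha_d)$ with $\alpha_j\in\{1,\dots,n\}$, $d\ge0$, $|\alpha|=d$; $W_{n,d}$ the words of length $d$; for $a\in A^n$, $a_\alpha=a_{\alpha_1}\cdots a_{\alpha_d}$ ($a_\emptyset=1$). $\mathcal{F}^T(\mathbb{D}_r^n)=\{\sum_{\alpha\in W_n}c_\alpha\zeta_\alpha:\|\cdot\|_\rho<\infty\ \forall\rho\in(0,r)\}$ with $\|\sum c_\alpha\zeta_\alpha\|_\rho=\sum_\alpha|c_\alpha|\rho^{|\alpha|}$, topology given by these norms and multiplication by concatenation of words. For a Banach algebra $B$ and $b\in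 B^n$, $r_\infty(b)=\lim_{d\to\infty}(\sup_{\alpha\in W_{n,d}}\|b_\alpha\|)^{1/d}$. An $n$-tuple $a\in A^n$ in an Arens–Michael algebra $A$ is strictly spectrally $r$-contractive if for every Banach algebra $B$ and every continuous homomorphism $\varphi:A\to B$ one has $r_\infty(\varphi(a))<r$; equivalently, for every continuous submultiplicative seminorm $\|\cdot\|$ on $A$ from a directed defining family, $\lim_{d\to\infty}(\sup_{\alpha\in W_{n,d}}\|a_\alpha\|)^{1/d}<r$. *)

(* Defs.v *)
From Stdlib Require Import Reals Lra List.
Import ListNotations.
Open Scope R_scope.

Definition C : Type := (R * R)%type.
Definition C0 : C := (0, 0).
Definition C1 : C := (1, 0).
Definition Cadd (z w : C) : C := (fst z + fst w, snd z + snd w).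
Definition Cmul (z w : C) : C :=
  (fst z * fst w - snd z * snd w, fst z * snd w + snd z * fst w).
Definition Cnorm (z : C) : R := sqrt (fst z ^ 2 + snd z ^ 2).
Definition Csum (l : list C) : C := fold_right Cadd C0 l.

Definition directed {D : Type} (le : D -> D -> Prop) : Prop :=
  inhabited D /\ (forall x, le x x) /\
  (forall x y z, le x y -> le y z -> le x z) /\
  (forall x y, exists z, le x z /\ le y z).

Record AMAlgebra : Type := {
  carrier :> Type;
  zero : carrier;
  one : carrier;
  add : carrier -> carrier -> carrier;
  opp : carrier -> carrier;
  mul : carrier -> carrier -> carrier;
  scal : C -> carrier -> carrier;
  idx : Type;
  sn : idx -> carrier -> R;
  addA : forall x y z, add x (add y z) = add (add x y) z;
  addC : forall x y, add x y = add y x;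
  add0 : forall x, add zero x = x;
  addN : forall x, add x (opp x) = zero;
  mulA : forall x y z, mul x (mul y z) = mul (mul x y) z;
  mul1l : forall x, mul one x = x;
  mul1r : forall x, mul x one = x;
  mulDl : forall x y z, mul (add x y) z = add (mul x z) (mul y z);
  mulDr : forall x y z, mul x (add y z) = add (mul x y) (mul x z);
  scalA : forall l m x, scal (Cmul l m) x = scal l (scal m x);
  scal1 : forall x, scal C1 x = x;
  scalDr : forall l x y, scal l (add x y) = add (scal l x) (scal l y);
  scalDl : forall l m x, scal (Cadd l m) x = add (scal l x) (scal m x);
  scalMl : forall l x y, scal l (mul x y) = mul (scal l x) y;
  scalMr : forall l x y, scal l (mul x y) = mul x (scal l y);
  sn_nonneg : forall i x, 0 <= sn i x;
  sn_triangle : forall i x y, sn i (add x y) <= sn i x + sn i y;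
  sn_homog : forall i l x, sn i (scal l x) = Cnorm l * sn i x;
  sn_submult : forall i x y, sn i (mul x y) <= sn i x * sn i y;
  hausdorff : forall x, (forall i, sn i x = 0) -> x = zero;
  complete : forall (D : Type) (le : D -> D -> Prop) (x : D -> carrier),
    directed le ->
    (forall i eps, 0 < eps -> exists d0, forall d1 d2, le d0 d1 -> le d0 d2 ->
        sn i (add (x d1) (opp (x d2))) < eps) ->
    exists l : carrier, forall i eps, 0 < eps -> exists d0, forall d, le d0 d ->
        sn i (add (x d) (opp l)) < eps
}.

Definition submult_seminorm (A : AMAlgebra) (q : A -> R) : Prop :=
  (forall x, 0 <= q x) /\
  (forall x y, q (add A x y) <= q x + q y) /\
  (forall l x, q (scal A l x) = Cnorm l * q x) /\
  (forall x y, q (mul A x y) <= q x * q y).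

Definition cont_seminorm (A : AMAlgebra) (q : A -> R) : Prop :=
  exists (l : list (idx A)) (K : R),
    forall x, q x <= K * fold_right (fun i s => sn A i x + s) 0 l.

(* ---------- Words ----------
   Letters are 0, ..., n-1 (the paper's 1, ..., n shifted by one).
   words n d = W_{n,d}, the list of all words of length d. *)
Fixpoint words (n d : nat) : list (list nat) :=
  match d with
  | O => [[]]
  | S d' => flat_map (fun i => map (cons i) (words n d')) (seq 0 n)
  end.

Definition word_prod (A : AMAlgebra) (a : nat -> A) (w : list nat) : A :=
  fold_right (fun i acc => mul A (a i) acc) (one A) w.

(* sup_{alpha in W_{n,d}} q(a_alpha)  (finite maximum; 0 if W_{n,d} is empty) *)
Definition word_sup (A : AMAlgebra) (q : A -> R) (n d : nat) (a : nat -> A) : R :=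
  fold_right Rmax 0 (map (fun w => q (word_prod A a w)) (words n d)).

Definition rootn (d : nat) (x : R) : R :=
  if Rle_dec x 0 then 0 else Rpower x (/ INR d).

Definition strictly_spectrally_contractive (A : AMAlgebra) (n : nat) (r : R)
    (a : nat -> A) : Prop :=
  forall q : A -> R, submult_seminorm A q -> cont_seminorm A q ->
    exists L : R,
      Un_cv (fun d => rootn (S d) (word_sup A q n (S d) a)) L /\ L < r.

Definition layer (n : nat) (c : list nat -> C) (rho : R) (d : nat) : R :=
  fold_right Rplus 0 (map (fun w => Cnorm (c w) * rho ^ d) (words n d)).

Definition norm_partial (n : nat) (c : list nat -> C) (rho : R) (N : nat) : R :=
  sum_f_R0 (layer n c rho) N.

Definition in_FT (n : nat) (r : R) (c : list nat -> C) : Prop :=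
  (forall w, ~ Forall (fun i => (i < n)%nat) w -> c w = C0) /\
  (forall rho, 0 < rho < r -> exists s, Un_cv (norm_partial n c rho) s).

Definition FT (n : nat) (r : R) : Type := { c : list nat -> C | in_FT n r c }.

Definition coef {n r} (f : FT n r) : list nat -> C := proj1_sig f.

(* multiplication by concatenation of words *)
Definition conv (f g : list nat -> C) (w : list nat) : C :=
  Csum (map (fun k => Cmul (f (firstn k w)) (g (skipn k w))) (seq 0 (S (length w)))).

Definition unit_coef (w : list nat) : C :=
  match w with [] => C1 | _ => C0 end.

Definition zeta (i : nat) (w : list nat) : C :=
  match w with [k] => if Nat.eq_dec k i then C1 else C0 | _ => C0 end.

(* continuous unital algebra homomorphism F^T(D_r^n) -> A
   (operations of F^T are described on coefficients) *)
Definition cont_hom (A : AMAlgebra) (n : nat) (r : R) (g : FT n r -> A) : Prop :=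
  (forall f1 f2 h : FT n r, (forall w, coef h w = Cadd (coef f1 w) (coef f2 w)) ->
      g h = add A (g f1) (g f2)) /\
  (forall (l : C) (f h : FT n r), (forall w, coef h w = Cmul l (coef f w)) ->
      g h = scal A l (g f)) /\
  (forall f1 f2 h : FT n r, (forall w, coef h w = conv (coef f1) (coef f2) w) ->
      g h = mul A (g f1) (g f2)) /\
  (forall h : FT n r, (forall w, coef h w = unit_coef w) -> g h = one A) /\
  (forall j : idx A, exists rho K, 0 < rho < r /\
      forall (f : FT n r) (s : R), Un_cv (norm_partial n (coef f) rho) s ->
        sn A j (g f) <= K * s).

Definition maps_gens (A : AMAlgebra) (n : nat) (r : R) (g : FT n r -> A)
    (b : nat -> A) : Prop :=
  forall i, (i < n)%nat -> forall h : FT n r,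
    (forall w, coef h w = zeta i w) -> g h = b i.

(* Main.v *)
Require Import Defs.
From Stdlib Require Import Reals Lra Lia List Classical ClassicalEpsilon FunctionalExtensionality.
Import Defs.
Import ListNotations.
Open Scope R_scope.

Ltac ceq := repeat match goal with z : C |- _ => destruct z end;
  unfold Cadd, Cmul, C0, C1 in *; simpl; f_equal; ring.

Lemma Cnorm_C0 : Cnorm C0 = 0.
Proof. unfold Cnorm. replace (fst C0 ^ 2 + snd C0 ^ 2) with 0 by (simpl; ring). apply sqrt_0. Qed.
Lemma Cnorm_C1 : Cnorm C1 = 1.
Proof. unfold Cnorm. replace (fst C1 ^ 2 + snd C1 ^ 2) with 1 by (simpl; ring). apply sqrt_1. Qed.
Lemma Cnorm_m1 : Cnorm (-1,0) = 1.
Proof. unfold Cnorm. replace (fst (-1,0) ^ 2 + snd (-1,0) ^ 2) with 1 by (simpl; ring). apply sqrt_1. Qed.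
Lemma Cnorm_nonneg z : 0 <= Cnorm z.
Proof. apply sqrt_pos. Qed.

Section Alg.
Variable A : AMAlgebra.

Definition sub (x y : A) : A := add A x (opp A y).

Lemma add0r (x : A) : add A x (zero A) = x.
Proof. rewrite addC, add0; auto. Qed.
Lemma addNl (x : A) : add A (opp A x) x = zero A.
Proof. rewrite addC, addN; auto. Qed.
Lemma opp_uniq (x y : A) : add A x y = zero A -> y = opp A x.
Proof.
  intro H. rewrite <- (add0 A y), <- (addNl x), <- addA, H, add0r; auto.
Qed.
Lemma idem_zero (y : A) : y = add A y y -> y = zero A.
Proof.
  intro H. assert (H0 : add A (add A y y) (opp A y) = zero A) by (rewrite <- H; apply addN).
  rewrite <- addA, addN, add0r in H0. auto.
Qed.
Lemma scal0 (x : A) : scal A C0 x = zero A.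
Proof.
  apply idem_zero. rewrite <- scalDl. f_equal. unfold Cadd, C0; simpl; f_equal; ring.
Qed.
Lemma scal_zero l : scal A l (zero A) = zero A.
Proof.
  apply idem_zero. rewrite <- scalDr, add0; auto.
Qed.
Lemma scalN (x : A) : scal A (-1,0) x = opp A x.
Proof.
  apply opp_uniq. rewrite <- (scal1 A x) at 1. rewrite <- scalDl.
  replace (Cadd C1 (-1,0)) with C0 by (unfold Cadd, C0, C1; simpl; f_equal; ring).
  apply scal0.
Qed.
Lemma mul0l (x : A) : mul A (zero A) x = zero A.
Proof. apply idem_zero. rewrite <- mulDl, add0; auto. Qed.
Lemma mul0r (x : A) : mul A x (zero A) = zero A.
Proof. apply idem_zero. rewrite <- mulDr, add0; auto. Qed.
Lemma opp_opp (x : A) : opp A (opp A x) = x.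
Proof. symmetry. apply opp_uniq. apply addNl. Qed.
Lemma opp_add (x y : A) : opp A (add A x y) = add A (opp A x) (opp A y).
Proof.
  symmetry; apply opp_uniq.
  rewrite (addC A (opp A x)), addA, <- (addA A x y), addN, add0r, addN; auto.
Qed.
Lemma opp_zero : opp A (zero A) = zero A.
Proof. symmetry; apply opp_uniq. apply add0. Qed.
Lemma mulNl (x y : A) : mul A (opp A x) y = opp A (mul A x y).
Proof. apply opp_uniq. rewrite <- mulDl, addN, mul0l; auto. Qed.
Lemma mulNr (x y : A) : mul A x (opp A y) = opp A (mul A x y).
Proof. apply opp_uniq. rewrite <- mulDr, addN, mul0r; auto. Qed.
Lemma sub_eq0 (x y : A) : sub x y = zero A -> x = y.
Proof.
  unfold sub; intro H. apply opp_uniq in H. rewrite <- (opp_opp x), <- H, opp_opp; auto.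
Qed.
Lemma sub_diag (x : A) : sub x x = zero A.
Proof. apply addN. Qed.

Lemma sn0 i : sn A i (zero A) = 0.
Proof. rewrite <- (scal0 (zero A)), sn_homog, Cnorm_C0; ring. Qed.
Lemma snN i (x : A) : sn A i (opp A x) = sn A i x.
Proof. rewrite <- scalN, sn_homog, Cnorm_m1; ring. Qed.
Lemma sn_sub_sym i (x y : A) : sn A i (sub x y) = sn A i (sub y x).
Proof.
  rewrite <- snN. unfold sub. rewrite opp_add, opp_opp, addC; auto.
Qed.
Lemma sn_sub_tri i (x y z : A) : sn A i (sub x z) <= sn A i (sub x y) + sn A i (sub y z).
Proof.
  replace (sub x z) with (add A (sub x y) (sub y z)). apply sn_triangle.
  unfold sub. rewrite <- addA, (addA A (opp A y)), addNl, add0; auto.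
Qed.
Lemma sub_add (x y u v : A) : sub (add A x y) (add A u v) = add A (sub x u) (sub y v).
Proof.
  unfold sub. rewrite opp_add. rewrite <- !addA. f_equal.
  rewrite !addA. f_equal. apply addC.
Qed.
Lemma sub_scal l (x y : A) : sub (scal A l x) (scal A l y) = scal A l (sub x y).
Proof.
  unfold sub. rewrite scalDr, <- !scalN, <- !scalA. f_equal. f_equal. ceq.
Qed.
Lemma sub_mul_l (x y z : A) : sub (mul A x z) (mul A y z) = mul A (sub x y) z.
Proof. unfold sub. rewrite mulDl, mulNl; auto. Qed.
Lemma sub_mul_r (x y z : A) : sub (mul A z x) (mul A z y) = mul A z (sub x y).
Proof. unfold sub. rewrite mulDr, mulNr; auto. Qed.
Lemma sn_mul_diff i (x y x' y' : A) :
  sn A i (sub (mul A x y) (mul A x' y')) <=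
  sn A i (sub x x') * sn A i y + sn A i x' * sn A i (sub y y').
Proof.
  eapply Rle_trans. apply (sn_sub_tri i _ (mul A x' y)).
  rewrite sub_mul_l, sub_mul_r. apply Rplus_le_compat; apply sn_submult.
Qed.
End Alg.

Lemma words_spec n d w : In w (words n d) <-> (length w = d /\ Forall (fun i => (i < n)%nat) w).
Proof.
  revert w; induction d; intro w; simpl.
  - split.
    + intros [H|[]]; subst; simpl; auto.
    + intros [H1 H2]; left; destruct w; simpl in *; auto; discriminate.
  - rewrite in_flat_map. split.
    + intros [i [Hi Hw]]. apply in_map_iff in Hw. destruct Hw as [u [<- Hu]].
      apply IHd in Hu. apply in_seq in Hi. destruct Hu; simpl; split; auto.
      constructor; auto; lia.
    + intros [H1 H2]. destruct w as [|i u]; simpl in H1; [discriminate|].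
      inversion H2; subst. exists i; split. apply in_seq; lia.
      apply in_map. apply IHd. split; auto.
Qed.

Lemma NoDup_flat_map {X Y} (f : X -> list Y) (l : list X) :
  NoDup l -> (forall x, In x l -> NoDup (f x)) ->
  (forall x y z, In x l -> In y l -> x <> y -> In z (f x) -> ~ In z (f y)) ->
  NoDup (flat_map f l).
Proof.
  induction l as [|x l IH]; simpl; intros Hl Hf Hd. constructor.
  inversion Hl; subst. apply NoDup_app; auto.
  apply IH; auto. intros x0 y0 z0 Q1 Q2 Q3; apply Hd; auto.
  intros z Hz Hz'. apply in_flat_map in Hz'. destruct Hz' as [y [Hy Hzy]].
  apply (Hd x y z); auto. intro; subst; auto.
Qed.

Lemma NoDup_map_cons (i : nat) (l : list (list nat)) : NoDup l -> NoDup (map (cons i) l).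
Proof.
  induction 1; simpl; constructor; auto.
  intro H1. apply in_map_iff in H1. destruct H1 as [u [Hu Hin]]. inversion Hu; subst; auto.
Qed.

Lemma words_nodup n d : NoDup (words n d).
Proof.
  induction d; simpl. repeat constructor; auto.
  apply NoDup_flat_map. apply seq_NoDup.
  intros; apply NoDup_map_cons; auto.
  intros x y z _ _ Hxy Hx Hy. apply in_map_iff in Hx, Hy.
  destruct Hx as [u [<- _]]. destruct Hy as [v [Hv _]]. inversion Hv; auto.
Qed.

Section Sums.
Variable A : AMAlgebra.

Definition asum (l : list A) : A := fold_right (add A) (zero A) l.

Fixpoint rsum (F : nat -> A) (N : nat) : A :=
  match N with O => F O | S N' => add A (rsum F N') (F (S N')) end.

Lemma asum_app l1 l2 : asum (l1 ++ l2) = add A (asum l1) (asum l2).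
Proof.
  induction l1; simpl. rewrite add0; auto. rewrite IHl1, addA; auto.
Qed.

Lemma add_swap4 (x y u v : A) : add A (add A x y) (add A u v) = add A (add A x u) (add A y v).
Proof.
  rewrite <- !addA. f_equal. rewrite !addA. f_equal. apply addC.
Qed.

Lemma asum_map_add {X} (F G : X -> A) l :
  asum (map (fun x => add A (F x) (G x)) l) = add A (asum (map F l)) (asum (map G l)).
Proof.
  induction l; simpl. rewrite add0; auto. rewrite IHl. apply add_swap4.
Qed.

Lemma asum_map_scal {X} c (F : X -> A) l :
  asum (map (fun x => scal A c (F x)) l) = scal A c (asum (map F l)).
Proof.
  induction l; simpl. rewrite scal_zero; auto. rewrite IHl, scalDr; auto.
Qed.

Lemma asum_map_mull {X} z (F : X -> A) l :
  asum (map (fun x => mul A z (F x)) l) = mul A z (asum (map F l)).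
Proof.
  induction l; simpl. rewrite mul0r; auto. rewrite IHl, mulDr; auto.
Qed.

Lemma asum_map_mulr {X} z (F : X -> A) l :
  asum (map (fun x => mul A (F x) z) l) = mul A (asum (map F l)) z.
Proof.
  induction l; simpl. rewrite mul0l; auto. rewrite IHl, mulDl; auto.
Qed.

Lemma asum_map_ext {X} (F G : X -> A) l :
  (forall x, In x l -> F x = G x) -> asum (map F l) = asum (map G l).
Proof.
  intro H; f_equal; apply map_ext_in; auto.
Qed.

Lemma asum_flat_map {X Y} (F : Y -> A) (G : X -> list Y) l :
  asum (map F (flat_map G l)) = asum (map (fun x => asum (map F (G x))) l).
Proof.
  induction l; simpl; auto. rewrite map_app, asum_app, IHl; auto.
Qed.

Lemma asum_zero {X} (F : X -> A) l : (forall x, In x l -> F x = zero A) -> asum (map F l) = zero A.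
Proof.
  induction l; simpl; intro H; auto. rewrite H, IHl, add0; auto.
Qed.

Lemma asum_exchange {X Y} (F : X -> Y -> A) L1 L2 :
  asum (map (fun k => asum (map (fun i => F i k) L1)) L2) =
  asum (map (fun i => asum (map (fun k => F i k) L2)) L1).
Proof.
  induction L2; simpl.
  - symmetry; apply asum_zero; auto.
  - rewrite IHL2. rewrite <- asum_map_add. auto.
Qed.

Lemma asum_single {X} (eqd : forall x y : X, {x = y} + {x <> y}) (F : X -> A) l y :
  NoDup l -> In y l -> (forall x, In x l -> x <> y -> F x = zero A) -> asum (map F l) = F y.
Proof.
  induction l; simpl; intros Hn Hy H. destruct Hy.
  inversion Hn; subst. destruct Hy as [<-|Hy].
  - rewrite asum_zero, add0r; auto. intros x Hx. apply H; auto. intro; subst; auto.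
  - rewrite IHl; auto. rewrite H; auto. apply add0. intro; subst; auto.
Qed.

Lemma sn_asum {X} i (F : X -> A) l :
  sn A i (asum (map F l)) <= fold_right Rplus 0 (map (fun x => sn A i (F x)) l).
Proof.
  induction l; simpl. rewrite sn0; lra.
  eapply Rle_trans. apply sn_triangle. lra.
Qed.

Lemma lsum_le {X} (f g : X -> R) l : (forall x, In x l -> f x <= g x) ->
  fold_right Rplus 0 (map f l) <= fold_right Rplus 0 (map g l).
Proof.
  induction l; simpl; intro H. lra. apply Rplus_le_compat; auto.
Qed.

Lemma lsum_mult {X} (f : X -> R) c l :
  fold_right Rplus 0 (map (fun x => c * f x) l) = c * fold_right Rplus 0 (map f l).
Proof. induction l; simpl. ring. rewrite IHl; ring. Qed.

Lemma lsum_nonneg {X} (f : X -> R) l : (forall x, In x l -> 0 <= f x) ->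
  0 <= fold_right Rplus 0 (map f l).
Proof. induction l; simpl; intro H. lra. apply Rplus_le_le_0_compat; auto. Qed.

Lemma rsum_ext F G N : (forall k, (k <= N)%nat -> F k = G k) -> rsum F N = rsum G N.
Proof.
  induction N; simpl; intro H. apply H; lia. rewrite IHN, H; auto; intros; apply H; lia.
Qed.
Lemma rsum_add F G N : rsum (fun k => add A (F k) (G k)) N = add A (rsum F N) (rsum G N).
Proof. induction N; simpl; auto. rewrite IHN. apply add_swap4. Qed.
Lemma rsum_scal c F N : rsum (fun k => scal A c (F k)) N = scal A c (rsum F N).
Proof. induction N; simpl; auto. rewrite IHN, scalDr; auto. Qed.
Lemma rsum_mull z F N : rsum (fun k => mul A z (F k)) N = mul A z (rsum F N).
Proof. induction N; simpl; auto. rewrite IHN, mulDr; auto. Qed.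
Lemma rsum_mulr z F N : rsum (fun k => mul A (F k) z) N = mul A (rsum F N) z.
Proof. induction N; simpl; auto. rewrite IHN, mulDl; auto. Qed.
Lemma rsum_sub F G N : rsum (fun k => sub A (F k) (G k)) N = sub A (rsum F N) (rsum G N).
Proof.
  induction N; simpl; auto. rewrite IHN. symmetry. apply sub_add.
Qed.
Lemma rsum_shift F N : rsum F (S N) = add A (F O) (rsum (fun k => F (S k)) N).
Proof.
  induction N; simpl; auto. simpl in IHN. rewrite IHN, addA; auto.
Qed.
Lemma asum_rsum {X} (F : X -> nat -> A) L N :
  asum (map (fun x => rsum (F x) N) L) = rsum (fun k => asum (map (fun x => F x k) L)) N.
Proof.
  induction N; simpl; auto. rewrite asum_map_add, IHN; auto.
Qed.
Lemma asum_seq_rsum F N : asum (map F (seq 0 (S N))) = rsum F N.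
Proof.
  induction N. simpl. apply add0r.
  rewrite seq_S, map_app, asum_app, IHN. simpl. rewrite add0r; auto.
Qed.
Lemma sn_rsum i F N : sn A i (rsum F N) <= sum_f_R0 (fun k => sn A i (F k)) N.
Proof.
  induction N; simpl. lra. eapply Rle_trans. apply sn_triangle. lra.
Qed.
Lemma sn_rsum_diff i F (b : nat -> R) m N : (m <= N)%nat ->
  (forall k, sn A i (F k) <= b k) ->
  sn A i (sub A (rsum F N) (rsum F m)) <= sum_f_R0 b N - sum_f_R0 b m.
Proof.
  intros Hm Hb. induction N.
  - assert (m = 0%nat) by lia; subst. simpl. rewrite sub_diag, sn0; lra.
  - destruct (Nat.eq_dec m (S N)) as [->|Hne]. rewrite sub_diag, sn0; lra.
    simpl. replace (sub A (add A (rsum F N) (F (S N))) (rsum F m)) with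
      (add A (sub A (rsum F N) (rsum F m)) (F (S N))).
    eapply Rle_trans. apply sn_triangle. specialize (IHN ltac:(lia)). specialize (Hb (S N)). lra.
    unfold sub. rewrite <- !addA. f_equal. apply addC.
Qed.
End Sums.

Lemma conv_cons f g i w :
  conv f g (i :: w) = Cadd (Cmul (f []) (g (i :: w))) (conv (fun u => f (i :: u)) g w).
Proof.
  unfold conv. simpl length. change (seq 0 (S (S (length w)))) with (0%nat :: seq 1 (S (length w))).
  rewrite <- (seq_shift (S (length w)) 0). unfold Csum. cbn [map fold_right]. rewrite map_map. reflexivity.
Qed.

Lemma conv_nil f g : conv f g [] = Cadd (Cmul (f []) (g [])) C0.
Proof. reflexivity. Qed.

Section Lay.
Variable A : AMAlgebra.
Variable n : nat.
Variable a : nat -> A.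

Lemma word_prod_app u v : word_prod A a (u ++ v) = mul A (word_prod A a u) (word_prod A a v).
Proof.
  induction u; simpl. rewrite mul1l; auto. rewrite IHu, mulA; auto.
Qed.

Definition Lay (c : list nat -> C) (d : nat) : A :=
  asum A (map (fun w => scal A (c w) (word_prod A a w)) (words n d)).
Definition Pp (c : list nat -> C) (N : nat) : A := rsum A (Lay c) N.

Lemma Lay_ext c1 c2 d : (forall w, In w (words n d) -> c1 w = c2 w) -> Lay c1 d = Lay c2 d.
Proof.
  intro H; unfold Lay; apply asum_map_ext. intros w Hw; rewrite H; auto.
Qed.
Lemma Lay_add c1 c2 d : Lay (fun w => Cadd (c1 w) (c2 w)) d = add A (Lay c1 d) (Lay c2 d).
Proof.
  unfold Lay. rewrite <- asum_map_add. apply asum_map_ext. intros; apply scalDl.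
Qed.
Lemma Lay_scal l c d : Lay (fun w => Cmul l (c w)) d = scal A l (Lay c d).
Proof.
  unfold Lay. rewrite <- asum_map_scal. apply asum_map_ext. intros; apply scalA.
Qed.
Lemma Lay_zero c d : (forall w, In w (words n d) -> c w = C0) -> Lay c d = zero A.
Proof.
  intro H. unfold Lay. apply asum_zero. intros w Hw. rewrite H; auto. apply scal0.
Qed.
Lemma Lay_0 c : Lay c 0 = scal A (c []) (one A).
Proof. unfold Lay; simpl. apply add0r. Qed.
Lemma Lay_S c d :
  Lay c (S d) = asum A (map (fun i => mul A (a i) (Lay (fun u => c (i :: u)) d)) (seq 0 n)).
Proof.
  unfold Lay. simpl words. rewrite asum_flat_map. apply asum_map_ext. intros i _.
  rewrite map_map, <- asum_map_mull. apply asum_map_ext. intros w _. simpl.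
  rewrite scalMr; auto.
Qed.

Lemma Lay_conv f g d :
  Lay (conv f g) d = rsum A (fun k => mul A (Lay f k) (Lay g (d - k))) d.
Proof.
  revert f; induction d; intro f.
  - simpl. rewrite !Lay_0, conv_nil, scalDl, scal0, add0r, scalA.
    rewrite <- scalMl, mul1l. auto.
  - rewrite rsum_shift. simpl (S d - 0)%nat. simpl (fun k => _).
    rewrite Lay_S.
    rewrite (asum_map_ext _ _ (fun i => add A (mul A (a i) (scal A (f []) (Lay (fun u => g (i :: u)) d)))
            (mul A (a i) (rsum A (fun k => mul A (Lay (fun u => f (i :: u)) k) (Lay g (d - k))) d)))).
    2:{ intros i _. rewrite <- IHd, <- mulDr. f_equal.
        rewrite (Lay_ext _ (fun w => Cadd (Cmul (f []) (g (i :: w))) (conv (fun u => f (i :: u)) g w))).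
        rewrite Lay_add, Lay_scal; auto. intros; apply conv_cons. }
    rewrite asum_map_add. f_equal.
    + rewrite Lay_0, (Lay_S g). rewrite <- scalMl, mul1l, <- asum_map_scal.
      apply asum_map_ext. intros; rewrite scalMr; auto.
    + rewrite (asum_map_ext _ _ (fun i => rsum A (fun k => mul A (a i) (mul A (Lay (fun u => f (i :: u)) k) (Lay g (d - k)))) d)).
      2:{ intros; rewrite rsum_mull; auto. }
      rewrite asum_rsum. apply rsum_ext. intros k _.
      rewrite Lay_S, <- asum_map_mulr. apply asum_map_ext. intros; apply mulA.
Qed.

Lemma sn_Lay i (M rho : R) c d :
  (forall w, In w (words n d) -> sn A i (word_prod A a w) <= M * rho ^ d) ->
  sn A i (Lay c d) <= M * layer n c rho d.
Proof.
  intro H. unfold Lay, layer. eapply Rle_trans. apply sn_asum.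
  rewrite <- lsum_mult. apply lsum_le. intros w Hw. rewrite sn_homog.
  specialize (H w Hw). pose proof (Cnorm_nonneg (c w)).
  replace (M * (Cnorm (c w) * rho ^ d)) with (Cnorm (c w) * (M * rho ^ d)) by ring.
  apply Rmult_le_compat_l; auto.
Qed.
End Lay.

Section Lim.
Variable A : AMAlgebra.

Definition cvA (x : nat -> A) (l : A) : Prop :=
  forall i eps, 0 < eps -> exists N0, forall N, (N0 <= N)%nat -> sn A i (sub A (x N) l) < eps.

Lemma zero_of_small (t : R) : 0 <= t -> (forall eps, 0 < eps -> t < eps) -> t = 0.
Proof.
  intros H0 H. destruct (Req_dec t 0); auto. specialize (H (t/2)). lra.
Qed.

Lemma eq_of_small (x y : A) : (forall i eps, 0 < eps -> sn A i (sub A x y) < eps) -> x = y.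
Proof.
  intro H. apply sub_eq0, hausdorff. intro i. apply zero_of_small. apply sn_nonneg.
  intros; apply H; auto.
Qed.

Lemma cvA_unique x l1 l2 : cvA x l1 -> cvA x l2 -> l1 = l2.
Proof.
  intros H1 H2. apply eq_of_small. intros i eps He.
  destruct (H1 i (eps/2)) as [N1 HN1]; [lra|]. destruct (H2 i (eps/2)) as [N2 HN2]; [lra|].
  specialize (HN1 (N1 + N2)%nat ltac:(lia)). specialize (HN2 (N1 + N2)%nat ltac:(lia)).
  eapply Rle_lt_trans. apply (sn_sub_tri A i _ (x (N1+N2)%nat)).
  rewrite sn_sub_sym. lra.
Qed.

Lemma cvA_exists (x : nat -> A) :
  (forall i eps, 0 < eps -> exists N0, forall N M, (N0 <= N)%nat -> (N0 <= M)%nat ->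
      sn A i (sub A (x N) (x M)) < eps) -> exists l, cvA x l.
Proof.
  intro H. destruct (complete A nat le x) as [l Hl].
  - split. constructor; exact O. split. intros; lia. split. intros; lia.
    intros u v; exists (u + v)%nat; lia.
  - exact H.
  - exists l. exact Hl.
Qed.

Lemma cvA_close (x y : nat -> A) l : cvA x l ->
  (forall i eps, 0 < eps -> exists N0, forall N, (N0 <= N)%nat -> sn A i (sub A (y N) (x N)) < eps) ->
  cvA y l.
Proof.
  intros Hx Hy i eps He.
  destruct (Hx i (eps/2)) as [N1 HN1]; [lra|]. destruct (Hy i (eps/2)) as [N2 HN2]; [lra|].
  exists (N1 + N2)%nat. intros N HN. specialize (HN1 N ltac:(lia)). specialize (HN2 N ltac:(lia)).
  eapply Rle_lt_trans. apply (sn_sub_tri A i _ (x N)). lra.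
Qed.

Lemma cvA_ext (x y : nat -> A) l : cvA x l -> (exists N0, forall N, (N0 <= N)%nat -> y N = x N) -> cvA y l.
Proof.
  intros Hx [N0 H]. apply (cvA_close x); auto. intros i eps He. exists N0. intros N HN.
  rewrite H, sub_diag, sn0; auto.
Qed.

Lemma cvA_const (l : A) : cvA (fun _ => l) l.
Proof. intros i eps He. exists O. intros. rewrite sub_diag, sn0; auto. Qed.

Lemma cvA_add x y l m : cvA x l -> cvA y m -> cvA (fun N => add A (x N) (y N)) (add A l m).
Proof.
  intros Hx Hy i eps He.
  destruct (Hx i (eps/2)) as [N1 HN1]; [lra|]. destruct (Hy i (eps/2)) as [N2 HN2]; [lra|].
  exists (N1 + N2)%nat. intros N HN. specialize (HN1 N ltac:(lia)). specialize (HN2 N ltac:(lia)).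
  rewrite sub_add. eapply Rle_lt_trans. apply sn_triangle. lra.
Qed.

Lemma cvA_scal c x l : cvA x l -> cvA (fun N => scal A c (x N)) (scal A c l).
Proof.
  intros Hx i eps He.
  destruct (Hx i (eps / (Cnorm c + 1))) as [N1 HN1].
  { apply Rdiv_lt_0_compat; auto. pose proof (Cnorm_nonneg c); lra. }
  exists N1. intros N HN. rewrite sub_scal, sn_homog. specialize (HN1 N HN).
  pose proof (Cnorm_nonneg c). pose proof (sn_nonneg A i (sub A (x N) l)).
  apply Rmult_lt_compat_l with (r := Cnorm c + 1) in HN1; [|lra].
  field_simplify in HN1; [|lra]. nra.
Qed.

Lemma cvA_mul x y l m : cvA x l -> cvA y m -> cvA (fun N => mul A (x N) (y N)) (mul A l m).
Proof.
  intros Hx Hy i eps He.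
  set (K := sn A i m + sn A i l + 2).
  assert (HK : 0 < K) by (unfold K; pose proof (sn_nonneg A i m); pose proof (sn_nonneg A i l); lra).
  set (de := Rmin 1 (eps / K)).
  assert (Hde : 0 < de) by (unfold de; apply Rmin_pos; [lra| apply Rdiv_lt_0_compat; auto]).
  destruct (Hx i de Hde) as [N1 HN1]. destruct (Hy i de Hde) as [N2 HN2].
  exists (N1 + N2)%nat. intros N HN. specialize (HN1 N ltac:(lia)). specialize (HN2 N ltac:(lia)).
  eapply Rle_lt_trans. apply sn_mul_diff.
  assert (Hy' : sn A i (y N) <= sn A i m + 1).
  { replace (y N) with (add A (sub A (y N) m) m). eapply Rle_trans. apply sn_triangle.
    assert (de <= 1) by (unfold de; apply Rmin_l). lra.
    unfold sub. rewrite <- addA, addNl, add0r; auto. }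
  assert (de * K <= eps).
  { assert (de <= eps / K) by (unfold de; apply Rmin_r).
    apply Rmult_le_compat_r with (r := K) in H; [|lra]. field_simplify in H; lra. }
  pose proof (sn_nonneg A i (sub A (x N) l)). pose proof (sn_nonneg A i (sub A (y N) m)).
  pose proof (sn_nonneg A i (y N)). pose proof (sn_nonneg A i l).
  apply Rle_lt_trans with (de * (sn A i m + 1) + sn A i l * de).
  apply Rplus_le_compat. apply Rmult_le_compat; lra. apply Rmult_le_compat_l; lra.
  unfold K in *. nra.
Qed.

Lemma cvA_bound x l i B : cvA x l -> (forall N, sn A i (x N) <= B) -> sn A i l <= B.
Proof.
  intros Hx HB. apply Rnot_lt_le. intro Hlt.
  destruct (Hx i (sn A i l - B)) as [N HN]; [lra|]. specialize (HN N (le_n _)).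
  assert (Hl : l = add A (x N) (opp A (sub A (x N) l))).
  { unfold sub. rewrite opp_add, opp_opp, addA, addN, add0; auto. }
  pose proof (sn_triangle A i (x N) (opp A (sub A (x N) l))) as H. rewrite snN, <- Hl in H.
  specialize (HB N). lra.
Qed.
End Lim.

Lemma layer_nonneg n c rho d : 0 <= rho -> 0 <= layer n c rho d.
Proof.
  intro H. unfold layer. apply lsum_nonneg. intros. apply Rmult_le_pos. apply Cnorm_nonneg.
  apply pow_le; auto.
Qed.

Lemma np_le_lim n c rho s N : 0 <= rho -> Un_cv (norm_partial n c rho) s -> norm_partial n c rho N <= s.
Proof.
  intros Hr Hc. apply growing_ineq; auto. intro k. unfold norm_partial. simpl.
  pose proof (layer_nonneg n c rho (S k) Hr). lra.
Qed.

Lemma np_nonneg n c rho N : 0 <= rho -> 0 <= norm_partial n c rho N.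
Proof.
  intro Hr. unfold norm_partial. apply cond_pos_sum. intro; apply layer_nonneg; auto.
Qed.

Lemma np_mono n c rho m N : 0 <= rho -> (m <= N)%nat -> norm_partial n c rho m <= norm_partial n c rho N.
Proof.
  intros Hr H. induction H. lra. unfold norm_partial in *; simpl.
  pose proof (layer_nonneg n c rho (S m0) Hr). lra.
Qed.

Lemma sum_tail (a : nat -> R) K N : (K <= N)%nat ->
  sum_f_R0 (fun k => if Compare_dec.le_lt_dec k K then 0 else a k) N = sum_f_R0 a N - sum_f_R0 a K.
Proof.
  intro H. induction H.
  - assert (forall m, (m <= K)%nat -> sum_f_R0 (fun k => if Compare_dec.le_lt_dec k K then 0 else a k) m = 0).
    { induction m; intro Hm; cbn [sum_f_R0]. destruct (Compare_dec.le_lt_dec 0 K); [lra| lia].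
      rewrite IHm by lia. destruct (Compare_dec.le_lt_dec (S m) K); [lra|lia]. }
    rewrite H by lia. ring.
  - cbn [sum_f_R0]. rewrite IHle. destruct (Compare_dec.le_lt_dec (S m) K); [lia|]. ring.
Qed.

Lemma sum_mono_le (f g : nat -> R) N : (forall k, (k <= N)%nat -> f k <= g k) -> sum_f_R0 f N <= sum_f_R0 g N.
Proof.
  induction N; simpl; intro H. apply H; lia. apply Rplus_le_compat. apply IHN; intros; apply H; lia. apply H; lia.
Qed.

Lemma sum_lin (f g : nat -> R) (u v : R) N :
  sum_f_R0 (fun k => u * f k + v * g k) N = u * sum_f_R0 f N + v * sum_f_R0 g N.
Proof. induction N; simpl. ring. rewrite IHN; ring. Qed.

Lemma conv_to_zero (a t : nat -> R) Sa B :
  (forall k, 0 <= a k) -> Un_cv (fun N => sum_f_R0 a N) Sa ->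
  (forall m, 0 <= t m <= B) -> Un_cv t 0 ->
  Un_cv (fun N => sum_f_R0 (fun k => a k * t (N - k)%nat) N) 0.
Proof.
  intros Ha HS Ht Ht0 eps He.
  assert (HSn : forall N, sum_f_R0 a N <= Sa).
  { apply growing_ineq; auto. intro k; simpl. specialize (Ha (Datatypes.S k)). lra. }
  assert (HB : 0 <= B) by (specialize (Ht O); lra).
  assert (HS0 : 0 <= Sa) by (specialize (HSn O); simpl in HSn; specialize (Ha O); lra).
  set (e1 := eps / (2 * (Sa + 1))). set (e2 := eps / (2 * (B + 1))).
  assert (He1 : 0 < e1) by (unfold e1; apply Rdiv_lt_0_compat; lra).
  assert (He2 : 0 < e2) by (unfold e2; apply Rdiv_lt_0_compat; lra).
  destruct (Ht0 e1 He1) as [m0 Hm0]. destruct (HS e2 He2) as [K HK].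
  exists (K + m0)%nat. intros N HN. unfold Rdist. rewrite Rminus_0_r.
  assert (Hpos : 0 <= sum_f_R0 (fun k => a k * t (N - k)%nat) N).
  { apply cond_pos_sum. intro k. apply Rmult_le_pos; auto. apply Ht. }
  rewrite Rabs_right by lra.
  apply Rle_lt_trans with (e1 * sum_f_R0 a N + B * sum_f_R0 (fun k => if Compare_dec.le_lt_dec k K then 0 else a k) N).
  - rewrite <- sum_lin. apply sum_mono_le. intros k Hk.
    destruct (Compare_dec.le_lt_dec k K).
    + specialize (Hm0 (N - k)%nat ltac:(lia)). unfold Rdist in Hm0. rewrite Rminus_0_r in Hm0.
      pose proof (Ht (N - k)%nat). rewrite Rabs_right in Hm0 by lra. specialize (Ha k). nra.
    + pose proof (Ht (N - k)%nat). specialize (Ha k). nra.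
  - rewrite sum_tail by lia.
    specialize (HK K (le_n _)). unfold Rdist in HK. rewrite Rabs_left1 in HK by (apply Rle_minus; auto).
    specialize (HSn N).
    assert (e1 * sum_f_R0 a N <= e1 * Sa) by (apply Rmult_le_compat_l; lra).
    assert (B * (sum_f_R0 a N - sum_f_R0 a K) <= B * e2).
    { apply Rmult_le_compat_l; lra. }
    assert (e1 * Sa < eps / 2).
    { unfold e1. apply Rmult_lt_reg_r with (2 * (Sa + 1)); [lra|].
      field_simplify; lra. }
    assert (B * e2 < eps / 2).
    { unfold e2. apply Rmult_lt_reg_r with (2 * (B + 1)); [lra|].
      field_simplify; lra. }
    lra.
Qed.

Lemma rootn_nonneg m x : 0 <= rootn m x.
Proof.
  unfold rootn. destruct (Rle_dec x 0). lra. left; apply exp_pos.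
Qed.

Lemma Rpower_inv_pow x m : 0 < x -> (1 <= m)%nat -> Rpower x (/ INR m) ^ m = x.
Proof.
  intros Hx Hm. rewrite <- Rpower_pow by (apply exp_pos). rewrite Rpower_mult.
  rewrite Rinv_l. apply Rpower_1; auto. apply not_0_INR; lia.
Qed.

Lemma pow_Rpower_inv y m : 0 < y -> (1 <= m)%nat -> Rpower (y ^ m) (/ INR m) = y.
Proof.
  intros Hy Hm. rewrite <- Rpower_pow by auto. rewrite Rpower_mult.
  rewrite Rinv_r. apply Rpower_1; auto. apply not_0_INR; lia.
Qed.

Lemma rootn_pow m x : 0 < x -> (1 <= m)%nat -> rootn m x ^ m = x.
Proof.
  intros Hx Hm. unfold rootn. destruct (Rle_dec x 0). lra. apply Rpower_inv_pow; auto.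
Qed.

Lemma rootn_le m x y : 0 < y -> (1 <= m)%nat -> x <= y ^ m -> rootn m x <= y.
Proof.
  intros Hy Hm Hx. unfold rootn. destruct (Rle_dec x 0). lra.
  rewrite <- (pow_Rpower_inv y m) by auto. apply Rle_Rpower_l.
  left; apply Rinv_0_lt_compat, lt_0_INR; lia. split; lra.
Qed.

Lemma le_of_rootn m x y : 0 <= y -> (1 <= m)%nat -> rootn m x <= y -> x <= y ^ m.
Proof.
  intros Hy Hm H. destruct (Rle_dec x 0). pose proof (pow_le y m Hy); lra.
  rewrite <- (rootn_pow m x) by (auto; lra). apply pow_incr. split; auto. apply rootn_nonneg.
Qed.

Lemma ge_of_rootn m x y : 0 < y -> (1 <= m)%nat -> y <= rootn m x -> y ^ m <= x.
Proof.
  intros Hy Hm H. destruct (Rle_dec x 0).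
  unfold rootn in H. destruct (Rle_dec x 0); [lra| contradiction].
  rewrite <- (rootn_pow m x) by (auto; lra). apply pow_incr. lra.
Qed.

Lemma pow_le_one x k : 0 <= x <= 1 -> x ^ k <= 1.
Proof.
  intro Hx. induction k; simpl. lra. pose proof (pow_le x k ltac:(lra)). nra.
Qed.

Lemma pow_le_1_anti x s m : 0 < x <= 1 -> (s <= m)%nat -> x ^ m <= x ^ s.
Proof.
  intros Hx Hs. replace m with (s + (m - s))%nat by lia. rewrite pow_add.
  pose proof (pow_le x s ltac:(lra)). assert (x ^ (m - s) <= 1) by (apply pow_le_one; lra).
  nra.
Qed.

Lemma fekete (w : nat -> R) :
  (forall m, 0 <= w m) ->
  (forall p q, (1 <= p)%nat -> (1 <= q)%nat -> w (p + q)%nat <= w p * w q) ->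
  exists L, 0 <= L /\ Un_cv (fun d => rootn (S d) (w (S d))) L /\
    (forall m, (1 <= m)%nat -> L <= rootn m (w m)).
Proof.
  intros Hw Hsub.
  set (v := fun m => rootn m (w m)).
  set (E := fun x => exists m, x = - v (S m)).
  destruct (completeness E) as [g [Hg1 Hg2]].
  { exists 0. intros x [m ->]. pose proof (rootn_nonneg (S m) (w (S m))). unfold v; lra. }
  { exists (- v 1%nat). exists O; auto. }
  set (L := - g).
  assert (HLv : forall m, (1 <= m)%nat -> L <= v m).
  { intros m Hm. destruct m. lia. assert (- v (S m) <= g) by (apply Hg1; exists m; auto). unfold L; lra. }
  assert (HL0 : 0 <= L).
  { assert (g <= 0). { apply Hg2. intros x [m ->]. pose proof (rootn_nonneg (S m) (w (S m))). unfold v; lra. }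
    unfold L; lra. }
  assert (Happ : forall eps, 0 < eps -> exists m, (1 <= m)%nat /\ v m < L + eps).
  { intros eps He. apply NNPP. intro Hn.
    assert (g <= g - eps).
    { apply Hg2. intros x [m ->]. apply Rnot_lt_le. intro Hlt. apply Hn. exists (S m). split. lia.
      unfold L. lra. }
    lra. }
  exists L. split; auto. split.
  2:{ intros m Hm. apply HLv; auto. }
  intros eps He.
  destruct (Happ (eps/4)) as [m [Hm1 Hvm]]; [lra|].
  set (z := L + eps/4). set (y := L + eps/2).
  assert (Hz : 0 < z) by (unfold z; lra). assert (Hzy : z < y) by (unfold z, y; lra).
  assert (Hwm : w m <= z ^ m) by (apply le_of_rootn; [lra|auto|unfold v in Hvm; unfold z; lra]).
  set (W := sum_f_R0 w m + 1).
  assert (HW : forall s, (s <= m)%nat -> w s <= W).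
  { intros s Hs. unfold W. assert (w s <= sum_f_R0 w m).
    { clear -Hw Hs. induction Hs. destruct s; simpl. lra. pose proof (cond_pos_sum w s Hw). lra.
      simpl. specialize (Hw (S m)). lra. }
    lra. }
  assert (HW1 : 1 <= W) by (unfold W; pose proof (cond_pos_sum w m Hw); lra).
  assert (Hqs : forall q s, (1 <= s)%nat -> (s <= m)%nat -> w (q * m + s)%nat <= z ^ (q * m) * W).
  { induction q; intros s Hs1 Hs2.
    - simpl. rewrite Rmult_1_l. apply HW; auto.
    - replace (S q * m + s)%nat with (m + (q * m + s))%nat by lia.
      eapply Rle_trans. apply Hsub; lia.
      replace (S q * m)%nat with (m + q * m)%nat by lia. rewrite pow_add.
      specialize (IHq s Hs1 Hs2). pose proof (Hw (q * m + s)%nat).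
      pose proof (Hw m). pose proof (pow_le z (q * m) ltac:(lra)).
      rewrite Rmult_assoc. apply Rmult_le_compat; auto. }
  set (c := Rmin 1 y ^ m).
  assert (Hc : 0 < c) by (unfold c; apply pow_lt; apply Rmin_pos; unfold y; lra).
  assert (Hys : forall s, (s <= m)%nat -> c <= y ^ s).
  { intros s Hs. unfold c. eapply Rle_trans. apply pow_le_1_anti; eauto.
    split. apply Rmin_pos; unfold y; lra. apply Rmin_l.
    apply pow_incr. split. left; apply Rmin_pos; unfold y; lra. apply Rmin_r. }
  set (lam := y / z).
  assert (Hlam : 1 < lam).
  { unfold lam. apply Rmult_lt_reg_r with z; auto. field_simplify; lra. }
  destruct (Pow_x_infinity lam ltac:(rewrite Rabs_right; lra) (W / c)) as [Q HQ].
  exists (Q * m + m)%nat. intros d Hd. unfold Rdist.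
  set (D := S d).
  assert (HD : D = (m * ((D - 1) / m) + (D - 1) mod m + 1)%nat).
  { pose proof (Nat.div_mod_eq (D - 1) m). unfold D in *; lia. }
  set (q := ((D - 1) / m)%nat) in *. set (s := ((D - 1) mod m + 1)%nat).
  assert (Hs : (1 <= s <= m)%nat).
  { unfold s. pose proof (Nat.mod_upper_bound (D - 1) m ltac:(lia)). lia. }
  assert (HqQ : (Q <= q)%nat).
  { unfold q. apply Nat.div_le_lower_bound. lia. unfold D; nia. }
  assert (HDe : D = (q * m + s)%nat) by (unfold s; lia).
  assert (HwD : w D <= y ^ D).
  { rewrite HDe. eapply Rle_trans. apply Hqs; lia.
    rewrite pow_add.
    specialize (HQ (q * m)%nat ltac:(nia)). rewrite Rabs_right in HQ.
    2:{ apply Rle_ge, pow_le; lra. }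
    assert (y = z * lam) by (unfold lam; field; lra).
    rewrite H, Rpow_mult_distr.
    assert (W <= lam ^ (q * m) * c).
    { apply Rmult_le_reg_r with (/ c). apply Rinv_0_lt_compat; auto.
      rewrite Rmult_assoc, Rinv_r by lra. unfold Rdiv in HQ. lra. }
    pose proof (pow_le z (q * m) ltac:(lra)).
    rewrite Rmult_assoc. apply Rmult_le_compat_l; auto.
    specialize (Hys s ltac:(lia)). rewrite <- H.
    pose proof (pow_le lam (q * m) ltac:(lra)).
    apply Rle_trans with (lam ^ (q * m) * c); auto. apply Rmult_le_compat_l; auto. }
  assert (HvD : rootn D (w D) <= y) by (apply rootn_le; auto; unfold y, D; lra || lia).
  assert (L <= rootn D (w D)) by (apply HLv; unfold D; lia).
  fold D. rewrite Rabs_right; unfold y in *; lra.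
Qed.

Lemma fekete_bound (w : nat -> R) L C rho :
  0 < rho -> (forall m, (1 <= m)%nat -> L <= rootn m (w m)) ->
  (forall m, (1 <= m)%nat -> w m <= C * rho ^ m) -> L <= rho.
Proof.
  intros Hr HL Hw. apply Rnot_lt_le. intro Hlt.
  set (lam := L / rho).
  assert (Hlam : 1 < lam) by (unfold lam; apply Rmult_lt_reg_r with rho; auto; field_simplify; lra).
  destruct (Pow_x_infinity lam ltac:(rewrite Rabs_right; lra) (C + 1)) as [Q HQ].
  specialize (HQ (S Q) ltac:(lia)). rewrite Rabs_right in HQ by (apply Rle_ge, pow_le; lra).
  assert (L ^ S Q <= w (S Q)) by (apply ge_of_rootn; try lra; try lia; apply HL; lia).
  specialize (Hw (S Q) ltac:(lia)).
  assert (L = lam * rho) by (unfold lam; field; lra).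
  rewrite H0, Rpow_mult_distr in H.
  pose proof (pow_lt rho (S Q) Hr). nra.
Qed.

Lemma Cadd0r z : Cadd z C0 = z. Proof. destruct z; unfold Cadd, C0; simpl; f_equal; ring. Qed.
Lemma Cadd0l z : Cadd C0 z = z. Proof. destruct z; unfold Cadd, C0; simpl; f_equal; ring. Qed.
Lemma Cmul0l z : Cmul C0 z = C0. Proof. destruct z; unfold Cmul, C0; simpl; f_equal; ring. Qed.
Lemma Cmul0r z : Cmul z C0 = C0. Proof. destruct z; unfold Cmul, C0; simpl; f_equal; ring. Qed.
Lemma Cmul1l z : Cmul C1 z = z. Proof. destruct z; unfold Cmul, C1; simpl; f_equal; ring. Qed.
Lemma Cmul1r z : Cmul z C1 = z. Proof. destruct z; unfold Cmul, C1; simpl; f_equal; ring. Qed.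

Lemma Csum_zero l : (forall x, In x l -> x = C0) -> Csum l = C0.
Proof.
  induction l; simpl; intro H; auto. rewrite (H a), IHl; auto. apply Cadd0l.
Qed.

Lemma conv_zero_l f g v : (forall u, f u = C0) -> conv f g v = C0.
Proof.
  intro H. unfold conv. apply Csum_zero. intros x Hx. apply in_map_iff in Hx.
  destruct Hx as [k [<- _]]. rewrite (H (firstn k v)). apply Cmul0l.
Qed.

Lemma conv_unit x g v : conv (fun u => match u with [] => x | _ => C0 end) g v = Cmul x (g v).
Proof.
  destruct v as [|j v]. rewrite conv_nil, Cadd0r; auto.
  rewrite conv_cons, conv_zero_l, Cadd0r; auto.
Qed.

Definition delta (w v : list nat) : C := if list_eq_dec Nat.eq_dec v w then C1 else C0.

Lemma conv_ext f1 f2 g v : (forall u, f1 u = f2 u) -> conv f1 g v = conv f2 g v.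
Proof.
  intro H. unfold conv. f_equal. apply map_ext. intro k. rewrite H; auto.
Qed.

Lemma conv_zeta_delta i w v : conv (zeta i) (delta w) v = delta (i :: w) v.
Proof.
  destruct v as [|j v].
  - rewrite conv_nil. simpl. rewrite Cmul0l, Cadd0r. unfold delta.
    destruct (list_eq_dec Nat.eq_dec [] (i :: w)); [discriminate|auto].
  - rewrite conv_cons. simpl (zeta i []). rewrite Cmul0l, Cadd0l.
    rewrite (conv_ext _ (fun u => match u with [] => (if Nat.eq_dec j i then C1 else C0) | _ => C0 end)).
    2:{ intro u; destruct u; reflexivity. }
    rewrite conv_unit. unfold delta.
    destruct (Nat.eq_dec j i) as [->|Hji].
    + rewrite Cmul1l. destruct (list_eq_dec Nat.eq_dec v w) as [E1|E1];
      destruct (list_eq_dec Nat.eq_dec (i :: v) (i :: w)) as [E|E]; auto.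
      subst; exfalso; auto. exfalso; inversion E; auto.
    + rewrite Cmul0l. destruct (list_eq_dec Nat.eq_dec (j :: v) (i :: w)) as [E|E]; auto.
      inversion E; exfalso; auto.
Qed.

Lemma lsum_zero {X} (f : X -> R) l : (forall x, In x l -> f x = 0) -> fold_right Rplus 0 (map f l) = 0.
Proof. induction l; simpl; intro H; auto. rewrite (H a), IHl; auto. ring. Qed.

Section FTs.
Variable n : nat.
Variable r : R.

Lemma FT_ext (f g : FT n r) : (forall w, coef f w = coef g w) -> f = g.
Proof.
  destruct f as [f Hf], g as [g Hg]. unfold coef; simpl. intro H.
  assert (f = g) by (apply functional_extensionality; auto). subst.
  f_equal. apply proof_irrelevance.
Qed.

Lemma layer_zero_fin c rho N d : (forall w, (N < length w)%nat -> c w = C0) -> (N < d)%nat ->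
  layer n c rho d = 0.
Proof.
  intros H Hd. unfold layer. apply lsum_zero. intros w Hw. apply words_spec in Hw.
  rewrite H by lia. rewrite Cnorm_C0; ring.
Qed.

Lemma fin_in_FT c N : (forall w, ~ Forall (fun i => (i < n)%nat) w -> c w = C0) ->
  (forall w, (N < length w)%nat -> c w = C0) -> in_FT n r c.
Proof.
  intros H1 H2. split; auto. intros rho Hrho. exists (norm_partial n c rho N).
  intros eps He. exists N. intros k Hk. unfold Rdist.
  assert (norm_partial n c rho k = norm_partial n c rho N).
  { induction Hk; auto. unfold norm_partial in *. simpl. rewrite IHHk.
    rewrite (layer_zero_fin c rho N (S m)); auto. ring. lia. }
  rewrite H, Rminus_diag, Rabs_R0; auto.
Qed.

Lemma delta_in_FT w : Forall (fun i => (i < n)%nat) w -> in_FT n r (delta w).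
Proof.
  intro Hw. apply (fin_in_FT _ (length w)).
  - intros v Hv. unfold delta. destruct (list_eq_dec Nat.eq_dec v w); auto. subst; contradiction.
  - intros v Hv. unfold delta. destruct (list_eq_dec Nat.eq_dec v w); auto. subst; lia.
Qed.

Lemma zeta_in_FT i : (i < n)%nat -> in_FT n r (zeta i).
Proof.
  intro Hi. apply (fin_in_FT _ 1).
  - intros v Hv. destruct v as [|k [|k' v]]; simpl; auto.
    destruct (Nat.eq_dec k i); auto. subst. exfalso; apply Hv. constructor; auto.
  - intros v Hv. destruct v as [|k [|k' v]]; simpl in *; auto; lia.
Qed.

Section Hom.
Variable A : AMAlgebra.
Variable g : FT n r -> A.
Hypothesis Hg : cont_hom A n r g.

Lemma g_zero_elt (h : FT n r) : (forall w, coef h w = C0) -> g h = zero A.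
Proof.
  intro H. destruct Hg as [Hadd _]. apply idem_zero. apply Hadd.
  intro w. rewrite H. symmetry; apply Cadd0l.
Qed.

Lemma g_delta (b : nat -> A) : maps_gens A n r g b ->
  forall w, Forall (fun i => (i < n)%nat) w ->
  forall h : FT n r, (forall v, coef h v = delta w v) -> g h = word_prod A b w.
Proof.
  intros Hb w; induction w as [|i w IH]; intros Hw h Hh.
  - destruct Hg as [_ [_ [_ [Hone _]]]]. simpl. apply Hone. intro v. rewrite Hh.
    unfold delta. destruct v; destruct (list_eq_dec Nat.eq_dec _ _); auto; try discriminate. exfalso; auto.
  - inversion Hw; subst.
    set (hz := exist _ (zeta i) (zeta_in_FT i H1) : FT n r).
    set (hd := exist _ (delta w) (delta_in_FT w H2) : FT n r).
    destruct Hg as [_ [_ [Hmul _]]]. simpl.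
    rewrite (Hmul hz hd h). f_equal. apply Hb; auto. apply IH; auto.
    intro v. rewrite Hh. unfold hz, hd, coef; simpl. symmetry; apply conv_zeta_delta.
Qed.
End Hom.
End FTs.

Lemma fold_Rmax_ge (l : list R) y : In y l -> y <= fold_right Rmax 0 l.
Proof.
  induction l; simpl; intro H. destruct H. destruct H as [->|H]. apply Rmax_l.
  eapply Rle_trans. apply IHl; auto. apply Rmax_r.
Qed.
Lemma fold_Rmax_nonneg (l : list R) : 0 <= fold_right Rmax 0 l.
Proof. induction l; simpl. lra. eapply Rle_trans. apply IHl. apply Rmax_r. Qed.
Lemma fold_Rmax_le (l : list R) B : 0 <= B -> (forall y, In y l -> y <= B) -> fold_right Rmax 0 l <= B.
Proof.
  induction l; simpl; intros HB H. auto. apply Rmax_lub; auto.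
Qed.

Lemma lsum_single {X} (eqd : forall x y : X, {x = y} + {x <> y}) (f : X -> R) l y :
  NoDup l -> In y l -> (forall x, In x l -> x <> y -> f x = 0) -> fold_right Rplus 0 (map f l) = f y.
Proof.
  induction l; simpl; intros Hn Hy H. destruct Hy.
  inversion Hn; subst. destruct Hy as [<-|Hy].
  - rewrite lsum_zero. ring. intros x Hx. apply H; auto. intro; subst; auto.
  - rewrite IHl; auto. rewrite H; auto. ring. intro; subst; auto.
Qed.

Section Conv.
Variable n : nat.
Variable r : R.

Lemma np_delta w d rho : In w (words n d) ->
  Un_cv (norm_partial n (delta w) rho) (rho ^ d).
Proof.
  intro Hw. pose proof Hw as Hw'. apply words_spec in Hw'. destruct Hw' as [Hlen Hf].
  assert (Hlay : forall k, layer n (delta w) rho k = if Nat.eq_dec k d then rho ^ d else 0).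
  { intro k. unfold layer. destruct (Nat.eq_dec k d) as [->|Hk].
    - rewrite (lsum_single (list_eq_dec Nat.eq_dec) _ _ w); auto. unfold delta.
      destruct (list_eq_dec Nat.eq_dec w w); [|exfalso; auto]. rewrite Cnorm_C1; ring.
      apply words_nodup. intros x Hx Hxw. unfold delta.
      destruct (list_eq_dec Nat.eq_dec x w); [contradiction|]. rewrite Cnorm_C0; ring.
    - apply lsum_zero. intros x Hx. apply words_spec in Hx. unfold delta.
      destruct (list_eq_dec Nat.eq_dec x w); [subst; lia|]. rewrite Cnorm_C0; ring. }
  assert (Hnp0 : forall N, norm_partial n (delta w) rho N = if Compare_dec.le_dec d N then rho ^ d else 0).
  { induction N; unfold norm_partial in *; cbn [sum_f_R0]; rewrite Hlay.
    - destruct (Nat.eq_dec 0 d); destruct (Compare_dec.le_dec d 0); auto; lia.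
    - rewrite IHN. destruct (Nat.eq_dec (S N) d); destruct (Compare_dec.le_dec d N); destruct (Compare_dec.le_dec d (S N));
      try lia; ring. }
  assert (Hnp : forall N, (d <= N)%nat -> norm_partial n (delta w) rho N = rho ^ d).
  { intros N HN. rewrite Hnp0. destruct (Compare_dec.le_dec d N); auto; lia. }
  intros eps He. exists d. intros N HN. unfold Rdist. rewrite Hnp, Rminus_diag, Rabs_R0; auto.
Qed.

Lemma word_sup_nonneg (A : AMAlgebra) q d (b : nat -> A) : word_sup A q n d b >= 0.
Proof. apply Rle_ge, fold_Rmax_nonneg. Qed.

Lemma word_sup_ge (A : AMAlgebra) q d (b : nat -> A) w : In w (words n d) -> q (word_prod A b w) <= word_sup A q n d b.
Proof.
  intro H. apply fold_Rmax_ge. apply (in_map (fun w => q (word_prod A b w))); auto.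
Qed.

Lemma word_sup_submult (A : AMAlgebra) q (b : nat -> A) : submult_seminorm A q ->
  forall p k, word_sup A q n (p + k) b <= word_sup A q n p b * word_sup A q n k b.
Proof.
  intros [Hq0 [_ [_ Hqm]]] p k. apply fold_Rmax_le.
  apply Rmult_le_pos; apply fold_Rmax_nonneg.
  intros y Hy. apply in_map_iff in Hy. destruct Hy as [x [<- Hx]].
  pose proof Hx as Hx'. apply words_spec in Hx'. destruct Hx' as [Hl Hf].
  rewrite <- (firstn_skipn p x) in Hf. apply Forall_app in Hf. destruct Hf as [Hf1 Hf2].
  rewrite <- (firstn_skipn p x). rewrite word_prod_app.
  eapply Rle_trans. apply Hqm. apply Rmult_le_compat; auto.
  apply word_sup_ge. apply words_spec; split; auto. apply firstn_length_le; lia.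
  apply word_sup_ge. apply words_spec; split; auto. rewrite length_skipn; lia.
Qed.

Lemma converse_dir (A : AMAlgebra) (phi : FT n r -> A) (b : nat -> A) :
  0 < r -> cont_hom A n r phi -> maps_gens A n r phi b -> strictly_spectrally_contractive A n r b.
Proof.
  intros Hr Hphi Hb q Hq [l [K HK]].
  assert (Hj : forall j, exists rho Kj, 0 < rho < r /\ 0 <= Kj /\
    forall d w, In w (words n d) -> sn A j (word_prod A b w) <= Kj * rho ^ d).
  { intro j. pose proof Hphi as Hphi2. destruct Hphi2 as [_ [_ [_ [_ Hc]]]]. destruct (Hc j) as [rho [Kj [Hrho HKj]]].
    exists rho, (Rabs Kj). split; auto. split. apply Rabs_pos.
    intros d w Hw. pose proof Hw as Hw'. apply words_spec in Hw'. destruct Hw' as [_ Hf].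
    set (h := exist _ (delta w) (delta_in_FT n r w Hf) : FT n r).
    rewrite <- (g_delta n r A phi Hphi b Hb w Hf h) by auto.
    pose proof (np_delta w d rho Hw) as Hnp. specialize (HKj h _ Hnp).
    eapply Rle_trans. apply HKj.
    apply Rmult_le_compat_r. apply pow_le; lra. apply Rle_abs. }
  assert (Hl : exists rho C, 0 < rho < r /\ 0 <= C /\
    forall d w, In w (words n d) ->
      fold_right (fun i s => sn A i (word_prod A b w) + s) 0 l <= C * rho ^ d).
  { clear HK. induction l as [|j l IH].
    - exists (r/2), 0. split. lra. split. lra. intros; simpl; lra.
    - destruct IH as [rho [C [Hrho [HC H]]]]. destruct (Hj j) as [rj [Kj [Hrj [HKj Hj']]]].
      exists (Rmax rho rj), (Kj + C). split. split. eapply Rlt_le_trans. apply Hrho. apply Rmax_l.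
      apply Rmax_lub_lt; lra. split. lra.
      intros d w Hw. simpl. specialize (H d w Hw). specialize (Hj' d w Hw).
      assert (rho ^ d <= Rmax rho rj ^ d) by (apply pow_incr; split; [lra|apply Rmax_l]).
      assert (rj ^ d <= Rmax rho rj ^ d) by (apply pow_incr; split; [lra|apply Rmax_r]).
      nra. }
  destruct Hl as [rho [C [Hrho [HC Hl]]]].
  set (wq := fun d => word_sup A q n d b).
  destruct (fekete wq) as [L [HL0 [HLc HLv]]].
  { intro m. apply Rge_le, word_sup_nonneg. }
  { intros p k _ _. apply word_sup_submult; auto. }
  exists L. split; auto.
  apply Rle_lt_trans with rho; [|lra].
  apply (fekete_bound wq L (Rabs K * C) rho); try lra; auto.
  intros m _. unfold wq, word_sup. apply fold_Rmax_le.
  apply Rmult_le_pos; [apply Rmult_le_pos; [apply Rabs_pos|auto]|apply pow_le; lra].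
  intros y Hy. apply in_map_iff in Hy. destruct Hy as [w [<- Hw]].
  eapply Rle_trans. apply HK.
  assert (0 <= fold_right (fun i s => sn A i (word_prod A b w) + s) 0 l).
  { clear. induction l; simpl. lra. pose proof (sn_nonneg A a (word_prod A b w)); lra. }
  specialize (Hl m w Hw).
  apply Rle_trans with (Rabs K * fold_right (fun i s => sn A i (word_prod A b w) + s) 0 l).
  apply Rmult_le_compat_r; auto. apply Rle_abs.
  rewrite Rmult_assoc. apply Rmult_le_compat_l; auto. apply Rabs_pos.
Qed.
End Conv.

Lemma sum_scal (f : nat -> R) (M : R) N : sum_f_R0 (fun k => M * f k) N = M * sum_f_R0 f N.
Proof. induction N; simpl. ring. rewrite IHN; ring. Qed.

Section Exist.
Variable n : nat.
Variable r : R.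
Variable A : AMAlgebra.
Variable a : nat -> A.
Hypothesis Hr : 0 < r.
Hypothesis Ha : strictly_spectrally_contractive A n r a.

Lemma sn_submult_seminorm i : submult_seminorm A (sn A i).
Proof.
  split. intro; apply sn_nonneg. split. intros; apply sn_triangle. split. intros; apply sn_homog.
  intros; apply sn_submult.
Qed.

Lemma bound_i i : exists rho M, 0 < rho < r /\ 0 <= M /\
  forall d w, In w (words n d) -> sn A i (word_prod A a w) <= M * rho ^ d.
Proof.
  destruct (Ha (sn A i) (sn_submult_seminorm i)) as [L [HL HLr]].
  { exists [i], 1. intro x; simpl; lra. }
  set (rho := (Rmax 0 L + r) / 2).
  assert (Hrho : 0 < rho < r /\ L < rho).
  { unfold rho. pose proof (Rmax_l 0 L). pose proof (Rmax_r 0 L).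
    assert (Rmax 0 L < r) by (apply Rmax_lub_lt; lra). lra. }
  destruct (HL (rho - L)) as [N0 HN0]; [lra|].
  set (ws := fun d => word_sup A (sn A i) n d a).
  set (M := 1 + sum_f_R0 (fun d => ws d / rho ^ d) N0).
  assert (Hws0 : forall d, 0 <= ws d) by (intro; apply Rge_le, word_sup_nonneg).
  assert (Hsum : forall d, 0 <= ws d / rho ^ d).
  { intro d. apply Rmult_le_pos; auto. left; apply Rinv_0_lt_compat, pow_lt; lra. }
  assert (HM1 : 1 <= M) by (unfold M; pose proof (cond_pos_sum _ N0 Hsum); lra).
  exists rho, M. split. lra. split. lra.
  intros d w Hw. eapply Rle_trans. apply (word_sup_ge n A (sn A i) d a w Hw). fold (ws d).
  destruct (Compare_dec.le_lt_dec d N0) as [Hd|Hd].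
  - assert (ws d / rho ^ d <= M - 1).
    { unfold M. clear -Hd Hsum. replace (1 + sum_f_R0 (fun d0 => ws d0 / rho ^ d0) N0 - 1)
        with (sum_f_R0 (fun d0 => ws d0 / rho ^ d0) N0) by ring.
      induction Hd. destruct d; cbn [sum_f_R0]. lra. pose proof (cond_pos_sum _ d Hsum); lra.
      cbn [sum_f_R0]. specialize (Hsum (S m)). lra. }
    assert (Hp : 0 < rho ^ d) by (apply pow_lt; lra).
    replace (ws d) with (ws d / rho ^ d * rho ^ d) by (field; lra). nra.
  - destruct d. lia. specialize (HN0 d ltac:(lia)). unfold Rdist in HN0.
    assert (rootn (S d) (word_sup A (sn A i) n (S d) a) <= rho).
    { pose proof (Rle_abs (rootn (S d) (word_sup A (sn A i) n (S d) a) - L)). lra. }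
    apply le_of_rootn in H; [|lra|lia]. fold (ws (S d)) in H.
    pose proof (pow_le rho (S d) ltac:(lra)). nra.
Qed.

Definition goodc (c : list nat -> C) : Prop :=
  forall rho, 0 < rho < r -> exists s, Un_cv (norm_partial n c rho) s.

Lemma Pp_cauchy i rho M c m N :
  0 < rho -> (forall d w, In w (words n d) -> sn A i (word_prod A a w) <= M * rho ^ d) ->
  (m <= N)%nat ->
  sn A i (sub A (Pp A n a c N) (Pp A n a c m)) <= M * (norm_partial n c rho N - norm_partial n c rho m).
Proof.
  intros Hrho HM Hm. unfold Pp. eapply Rle_trans. apply (sn_rsum_diff A i _ (fun k => M * layer n c rho k)); auto.
  intro k. apply sn_Lay. apply HM.
  rewrite !sum_scal. unfold norm_partial. lra.
Qed.

Lemma Pp_sn i rho M c N :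
  0 < rho -> (forall d w, In w (words n d) -> sn A i (word_prod A a w) <= M * rho ^ d) ->
  sn A i (Pp A n a c N) <= M * norm_partial n c rho N.
Proof.
  intros Hrho HM. unfold Pp. eapply Rle_trans. apply sn_rsum.
  unfold norm_partial. rewrite <- sum_scal. apply sum_mono_le. intros k _. apply sn_Lay; auto.
Qed.

Lemma Pp_conv_exists c : goodc c -> exists l, cvA A (Pp A n a c) l.
Proof.
  intro Hc. apply cvA_exists. intros i eps He.
  destruct (bound_i i) as [rho [M [Hrho [HM Hb]]]].
  destruct (Hc rho Hrho) as [s Hs].
  set (e' := eps / (2 * (M + 1))).
  assert (He' : 0 < e') by (unfold e'; apply Rdiv_lt_0_compat; lra).
  destruct (Hs e' He') as [N0 HN0]. exists N0.
  assert (Hk : forall N m, (N0 <= N)%nat -> (N0 <= m)%nat -> (m <= N)%nat ->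
             sn A i (sub A (Pp A n a c N) (Pp A n a c m)) < eps).
  { intros N m HN Hm HmN. eapply Rle_lt_trans. apply (Pp_cauchy i rho M); auto. lra.
    pose proof (HN0 m Hm) as HN1. specialize (HN0 N HN).
    unfold Rdist in *.
    assert (norm_partial n c rho N - norm_partial n c rho m < 2 * e').
    { pose proof (Rle_abs (norm_partial n c rho N - s)).
      pose proof (Rle_abs (- (norm_partial n c rho m - s))). rewrite Rabs_Ropp in H0. lra. }
    assert (M * (norm_partial n c rho N - norm_partial n c rho m) <= M * (2 * e')).
    { apply Rmult_le_compat_l; lra. }
    assert (M * (2 * e') < eps).
    { unfold e'. apply Rmult_lt_reg_r with (M + 1); [lra|]. field_simplify; [|lra]. nra. }
    lra. }
  intros N m HN Hm. destruct (Compare_dec.le_ge_dec m N).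
  apply Hk; auto. rewrite sn_sub_sym. apply Hk; auto.
Qed.

Lemma FT_good (f : FT n r) : goodc (coef f).
Proof. exact (proj2 (proj2_sig f)). Qed.

Definition gam (f : FT n r) : A :=
  epsilon (inhabits (zero A)) (fun l => cvA A (Pp A n a (coef f)) l).

Lemma gam_spec f : cvA A (Pp A n a (coef f)) (gam f).
Proof.
  unfold gam. apply epsilon_spec. apply Pp_conv_exists, FT_good.
Qed.

Lemma Pp_ext c1 c2 N : (forall w, c1 w = c2 w) -> Pp A n a c1 N = Pp A n a c2 N.
Proof.
  intro H. unfold Pp. apply rsum_ext. intros k _. apply Lay_ext. intros; apply H.
Qed.

Lemma gam_add (f1 f2 h : FT n r) : (forall w, coef h w = Cadd (coef f1 w) (coef f2 w)) ->
  gam h = add A (gam f1) (gam f2).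
Proof.
  intro H. apply (cvA_unique A (Pp A n a (coef h))). apply gam_spec.
  apply (cvA_ext A (fun N => add A (Pp A n a (coef f1) N) (Pp A n a (coef f2) N))).
  apply cvA_add; apply gam_spec. exists O. intros N _.
  rewrite (Pp_ext _ _ N H). unfold Pp. rewrite <- rsum_add. apply rsum_ext. intros; apply Lay_add.
Qed.

Lemma gam_scal l (f h : FT n r) : (forall w, coef h w = Cmul l (coef f w)) ->
  gam h = scal A l (gam f).
Proof.
  intro H. apply (cvA_unique A (Pp A n a (coef h))). apply gam_spec.
  apply (cvA_ext A (fun N => scal A l (Pp A n a (coef f) N))).
  apply cvA_scal; apply gam_spec. exists O. intros N _.
  rewrite (Pp_ext _ _ N H). unfold Pp. rewrite <- rsum_scal. apply rsum_ext. intros; apply Lay_scal.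
Qed.

Lemma gam_one (h : FT n r) : (forall w, coef h w = unit_coef w) -> gam h = one A.
Proof.
  intro H. apply (cvA_unique A (Pp A n a (coef h))). apply gam_spec.
  apply (cvA_ext A (fun _ => one A)). apply cvA_const. exists O. intros N _.
  rewrite (Pp_ext _ _ N H). unfold Pp. induction N; simpl.
  rewrite Lay_0. simpl. apply scal1.
  rewrite IHN. rewrite Lay_zero. apply add0r. intros w Hw. apply words_spec in Hw.
  destruct w; simpl in *; auto. lia.
Qed.

Lemma cauchy_id (F G : nat -> A) N :
  rsum A (fun d => rsum A (fun k => mul A (F k) (G (d - k)%nat)) d) N =
  rsum A (fun k => mul A (F k) (rsum A G (N - k))) N.
Proof.
  induction N. simpl; auto.
  cbn [rsum]. rewrite IHN. rewrite Nat.sub_diag. cbn [rsum].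
  rewrite (rsum_ext A (fun k => mul A (F k) (rsum A G (S N - k)))
            (fun k => add A (mul A (F k) (rsum A G (N - k))) (mul A (F k) (G (S N - k)%nat)))).
  2:{ intros k Hk. replace (S N - k)%nat with (S (N - k)) by lia. cbn [rsum]. apply mulDr. }
  rewrite rsum_add. rewrite <- !addA. auto.
Qed.

Lemma gam_mul (f g h : FT n r) : (forall w, coef h w = conv (coef f) (coef g) w) ->
  gam h = mul A (gam f) (gam g).
Proof.
  intro H. apply (cvA_unique A (Pp A n a (coef h))). apply gam_spec.
  apply (cvA_close A (fun N => mul A (Pp A n a (coef f) N) (Pp A n a (coef g) N))).
  apply cvA_mul; apply gam_spec.
  intros i eps He.
  destruct (bound_i i) as [rho [M [Hrho [HM Hb]]]].
  destruct (FT_good f rho Hrho) as [sf Hsf]. destruct (FT_good g rho Hrho) as [sg Hsg].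
  set (t := fun m => M * M * (sg - norm_partial n (coef g) rho m)).
  assert (Ht : forall m, 0 <= t m <= M * M * sg).
  { intro m. unfold t. pose proof (np_le_lim n (coef g) rho sg m ltac:(lra) Hsg).
    pose proof (np_nonneg n (coef g) rho m ltac:(lra)). split; [|nra].
    apply Rmult_le_pos. nra. lra. }
  assert (Ht0 : Un_cv t 0).
  { intros e He'. destruct (Req_dec M 0) as [HM0|HM0].
    - exists O. intros. unfold t, Rdist. rewrite HM0. rewrite Rmult_0_l, Rmult_0_l, Rminus_0_r, Rabs_R0. lra.
    - destruct (Hsg (e / (M * M))) as [N0 HN0]. apply Rdiv_lt_0_compat; auto. nra.
      exists N0. intros m Hm. specialize (HN0 m Hm). unfold Rdist in *. unfold t.
      rewrite Rminus_0_r, Rabs_mult. rewrite (Rabs_right (M * M)) by nra.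
      rewrite <- Rabs_Ropp. replace (- (sg - norm_partial n (coef g) rho m)) with (norm_partial n (coef g) rho m - sg) by ring.
      apply Rmult_lt_reg_l with (/ (M * M)). apply Rinv_0_lt_compat; nra.
      rewrite <- Rmult_assoc, Rinv_l by nra. rewrite Rmult_1_l. unfold Rdiv in HN0. lra. }
  assert (Hl0 : forall k, 0 <= layer n (coef f) rho k) by (intro; apply layer_nonneg; lra).
  destruct (conv_to_zero (layer n (coef f) rho) t sf (M * M * sg) Hl0 Hsf Ht Ht0 eps He) as [N0 HN0].
  exists N0. intros N HN. specialize (HN0 N HN). unfold Rdist in HN0. rewrite Rminus_0_r in HN0.
  rewrite sn_sub_sym.
  assert (Hid : sub A (mul A (Pp A n a (coef f) N) (Pp A n a (coef g) N)) (Pp A n a (coef h) N) =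
    rsum A (fun k => mul A (Lay A n a (coef f) k) (sub A (Pp A n a (coef g) N) (Pp A n a (coef g) (N - k)))) N).
  { rewrite (Pp_ext _ _ N H). unfold Pp at 3. rewrite (rsum_ext A _ (fun d => rsum A (fun k => mul A (Lay A n a (coef f) k) (Lay A n a (coef g) (d - k))) d)).
    2:{ intros; apply Lay_conv. }
    rewrite cauchy_id. unfold Pp at 1. rewrite <- rsum_mulr. rewrite <- rsum_sub.
    apply rsum_ext. intros; apply sub_mul_r. }
  rewrite Hid.
  apply Rle_lt_trans with (sum_f_R0 (fun k => layer n (coef f) rho k * t (N - k)%nat) N).
  - eapply Rle_trans. apply sn_rsum. apply sum_mono_le. intros k Hk.
    eapply Rle_trans. apply sn_submult.
    pose proof (sn_Lay A n a i M rho (coef f) k (Hb k)) as H1.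
    pose proof (Pp_cauchy i rho M (coef g) (N - k) N ltac:(lra) Hb ltac:(lia)) as H2.
    pose proof (np_le_lim n (coef g) rho sg N ltac:(lra) Hsg) as H3.
    pose proof (layer_nonneg n (coef f) rho k ltac:(lra)) as H4.
    pose proof (sn_nonneg A i (Lay A n a (coef f) k)) as H5.
    pose proof (sn_nonneg A i (sub A (Pp A n a (coef g) N) (Pp A n a (coef g) (N - k)))) as H6.
    apply Rle_trans with ((M * layer n (coef f) rho k) * (M * (sg - norm_partial n (coef g) rho (N - k)))).
    apply Rmult_le_compat; auto. eapply Rle_trans. apply H2. apply Rmult_le_compat_l; lra.
    unfold t. right; ring.
  - apply Rle_lt_trans with (1 := Rle_abs _). exact HN0.
Qed.
End Exist.

Section Props.
Variable n : nat.
Variable r : R.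
Variable A : AMAlgebra.
Variable a : nat -> A.
Hypothesis Hr : 0 < r.
Hypothesis Ha : strictly_spectrally_contractive A n r a.

Lemma gam_cont : forall j : idx A, exists rho K, 0 < rho < r /\
  forall (f : FT n r) (s : R), Un_cv (norm_partial n (coef f) rho) s -> sn A j (gam n r A a f) <= K * s.
Proof.
  intro j. destruct (bound_i n r A a Hr Ha j) as [rho [M [Hrho [HM Hb]]]].
  exists rho, M. split; auto. intros f s Hs.
  apply (cvA_bound A (Pp A n a (coef f))). apply gam_spec; auto.
  intro N. eapply Rle_trans. apply (Pp_sn n A a j rho M); auto. lra.
  apply Rmult_le_compat_l; auto. apply np_le_lim; auto; lra.
Qed.

Lemma gam_gens : maps_gens A n r (gam n r A a) a.
Proof.
  intros i Hi h Hh. apply (cvA_unique A (Pp A n a (coef h))). apply gam_spec; auto.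
  apply (cvA_ext A (fun _ => a i)). apply cvA_const. exists 1%nat. intros N HN.
  rewrite (Pp_ext n A a _ _ N Hh).
  assert (L0 : Lay A n a (zeta i) 0 = zero A) by (rewrite Lay_0; apply scal0).
  assert (L1 : Lay A n a (zeta i) 1 = a i).
  { rewrite Lay_S. rewrite (asum_single A Nat.eq_dec _ _ i).
    - rewrite Lay_0. simpl. destruct (Nat.eq_dec i i); [|lia]. rewrite scal1, mul1r; auto.
    - apply seq_NoDup.
    - apply in_seq; lia.
    - intros x Hx Hxi. rewrite Lay_0. simpl. destruct (Nat.eq_dec x i); [lia|].
      rewrite scal0, mul0r; auto. }
  assert (L2 : forall d, Lay A n a (zeta i) (S (S d)) = zero A).
  { intro d. apply Lay_zero. intros w Hw. apply words_spec in Hw. destruct Hw as [Hl _].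
    destruct w as [|x [|y w]]; simpl in *; auto; lia. }
  induction HN. unfold Pp; simpl. rewrite L0, L1, add0; auto.
  unfold Pp in *; simpl. destruct m; [lia|]. rewrite IHHN, L2, add0r; auto.
Qed.

Section Uniq.
Variable g : FT n r -> A.
Hypothesis Hg : cont_hom A n r g.
Hypothesis Hb : maps_gens A n r g a.

Definition ldec := list_eq_dec Nat.eq_dec.

Lemma gL (c : list nat -> C) N L : NoDup L ->
  (forall w, In w L -> Forall (fun i => (i < n)%nat) w /\ (length w <= N)%nat) ->
  forall h : FT n r, (forall v, coef h v = if in_dec ldec v L then c v else C0) ->
  g h = asum A (map (fun w => scal A (c w) (word_prod A a w)) L).
Proof.
  induction L as [|x L IH]; intros HL HLw h Hh.
  - simpl. apply g_zero_elt; auto.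
  - inversion HL; subst. destruct (HLw x (or_introl eq_refl)) as [Hx Hxl].
    assert (HLw' : forall w, In w L -> Forall (fun i => (i < n)%nat) w /\ (length w <= N)%nat).
    { intros; apply HLw; right; auto. }
    assert (F1 : in_FT n r (fun v => if in_dec ldec v L then c v else C0)).
    { apply (fin_in_FT n r _ N).
      - intros v Hv. destruct (in_dec ldec v L); auto. exfalso; apply Hv, HLw'; auto.
      - intros v Hv. destruct (in_dec ldec v L); auto. pose proof (HLw' v i). lia. }
    assert (F2 : in_FT n r (fun v => Cmul (c x) (delta x v))).
    { apply (fin_in_FT n r _ N).
      - intros v Hv. unfold delta. destruct (list_eq_dec Nat.eq_dec v x). subst; contradiction. apply Cmul0r.
      - intros v Hv. unfold delta. destruct (list_eq_dec Nat.eq_dec v x). subst; lia. apply Cmul0r. }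
    set (h1 := exist _ _ F1 : FT n r). set (h2 := exist _ _ F2 : FT n r).
    set (hd := exist _ _ (delta_in_FT n r x Hx) : FT n r).
    destruct Hg as [Hadd [Hscal _]].
    rewrite (Hadd h1 h2 h).
    + rewrite (IH H2 HLw' h1) by auto.
      rewrite (Hscal (c x) hd h2) by auto.
      rewrite (g_delta n r A g Hg a Hb x Hx hd) by auto.
      simpl. apply addC.
    + intro w. rewrite Hh. unfold h1, h2, coef; cbn [proj1_sig]. unfold delta.
      destruct (list_eq_dec Nat.eq_dec w x) as [->|Hwx].
      * destruct (in_dec ldec x (x :: L)); [|exfalso; apply n0; left; auto].
        destruct (in_dec ldec x L); [contradiction|]. rewrite Cadd0l, Cmul1r; auto.
      * rewrite Cmul0r, Cadd0r. destruct (in_dec ldec w (x :: L)) as [I1|I1];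
        destruct (in_dec ldec w L) as [I2|I2]; auto.
        destruct I1; [subst; exfalso; auto| contradiction].
        exfalso; apply I1; right; auto.
Qed.

Variable c : list nat -> C.
Hypothesis Hc : forall w, ~ Forall (fun i => (i < n)%nat) w -> c w = C0.

Lemma gE d (h : FT n r) : (forall v, coef h v = if in_dec ldec v (words n d) then c v else C0) ->
  g h = Lay A n a c d.
Proof.
  intro Hh. unfold Lay. apply (gL c d); auto. apply words_nodup.
  intros w Hw. apply words_spec in Hw. destruct Hw; split; auto; lia.
Qed.

Lemma E_in_FT d : in_FT n r (fun v => if in_dec ldec v (words n d) then c v else C0).
Proof.
  apply (fin_in_FT n r _ d).
  - intros v Hv. destruct (in_dec ldec v (words n d)); auto.
  - intros v Hv. destruct (in_dec ldec v (words n d)) as [I|I]; auto.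
    apply words_spec in I. lia.
Qed.

Lemma R_in_FT N : in_FT n r (fun v => if Compare_dec.le_dec (length v) N then c v else C0).
Proof.
  apply (fin_in_FT n r _ N).
  - intros v Hv. destruct (Compare_dec.le_dec (length v) N); auto.
  - intros v Hv. destruct (Compare_dec.le_dec (length v) N); auto. lia.
Qed.

Lemma gR N (h : FT n r) : (forall v, coef h v = if Compare_dec.le_dec (length v) N then c v else C0) ->
  g h = Pp A n a c N.
Proof.
  revert h. induction N; intros h Hh.
  - unfold Pp; simpl. apply gE. intro v. rewrite Hh.
    destruct (Compare_dec.le_dec (length v) 0); destruct (in_dec ldec v (words n 0)) as [I|I]; auto.
    + apply Hc. intro Hf. apply I. apply words_spec. split; auto. lia.
    + apply words_spec in I. lia.
  - set (h1 := exist _ _ (R_in_FT N) : FT n r). set (h2 := exist _ _ (E_in_FT (S N)) : FT n r).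
    destruct Hg as [Hadd _]. rewrite (Hadd h1 h2 h).
    + unfold Pp; simpl. f_equal. apply IHN. intro; auto. apply gE. intro; auto.
    + intro v. rewrite Hh. unfold h1, h2, coef; cbn [proj1_sig].
      destruct (Compare_dec.le_dec (length v) (S N)); destruct (Compare_dec.le_dec (length v) N);
      destruct (in_dec ldec v (words n (S N))) as [I|I]; try lia.
      * apply words_spec in I. lia.
      * rewrite Cadd0r; auto.
      * rewrite Cadd0l; auto.
      * rewrite Cadd0l. apply Hc. intro Hf. apply I. apply words_spec. split; auto. lia.
      * apply words_spec in I. lia.
      * rewrite Cadd0l; auto.
Qed.
End Uniq.
End Props.

Lemma tail_cv n (c : list nat -> C) N rho s :
  Un_cv (norm_partial n c rho) s ->
  Un_cv (norm_partial n (fun v => if Compare_dec.le_dec (length v) N then C0 else c v) rho)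
        (s - norm_partial n c rho N).
Proof.
  intro Hs'.
  set (T := fun v => if Compare_dec.le_dec (length v) N then C0 else c v).
  assert (HL : forall k, layer n T rho k = if Compare_dec.le_dec k N then 0 else layer n c rho k).
  { intro k. unfold layer. destruct (Compare_dec.le_dec k N).
    - apply lsum_zero. intros w Hw. apply words_spec in Hw. unfold T.
      destruct (Compare_dec.le_dec (length w) N); [|lia]. rewrite Cnorm_C0; ring.
    - f_equal. apply map_ext_in. intros w Hw. apply words_spec in Hw. unfold T.
      destruct (Compare_dec.le_dec (length w) N); [lia|]. auto. }
  assert (HT : forall M, (N <= M)%nat -> norm_partial n T rho M = norm_partial n c rho M - norm_partial n c rho N).
  { intros M HM. induction HM.
    - assert (forall m, (m <= N)%nat -> norm_partial n T rho m = 0).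
      { induction m; intro Hm; unfold norm_partial in *; cbn [sum_f_R0]; rewrite HL.
        destruct (Compare_dec.le_dec 0 N); [auto|lia].
        rewrite IHm by lia. destruct (Compare_dec.le_dec (S m) N); [ring|lia]. }
      rewrite H by lia. ring.
    - unfold norm_partial in *. cbn [sum_f_R0]. rewrite IHHM, HL.
      destruct (Compare_dec.le_dec (S m) N); [lia|ring]. }
  intros eps He. destruct (Hs' eps He) as [N0 HN0]. exists (N + N0)%nat. intros M HM.
  unfold Rdist. rewrite HT by lia. specialize (HN0 M ltac:(lia)). unfold Rdist in HN0.
  replace (norm_partial n c rho M - norm_partial n c rho N - (s - norm_partial n c rho N))
    with (norm_partial n c rho M - s) by ring. auto.
Qed.

Lemma tail_in_FT n r (c : list nat -> C) N :
  (forall w, ~ Forall (fun i => (i < n)%nat) w -> c w = C0) ->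
  (forall rho, 0 < rho < r -> exists s, Un_cv (norm_partial n c rho) s) ->
  in_FT n r (fun v => if Compare_dec.le_dec (length v) N then C0 else c v).
Proof.
  intros Hc Hs. split.
  - intros w Hw. destruct (Compare_dec.le_dec (length w) N); auto.
  - intros rho Hrho. destruct (Hs rho Hrho) as [s Hs']. exists (s - norm_partial n c rho N).
    apply tail_cv; auto.
Qed.

Lemma g_cv n r (A : AMAlgebra) (a : nat -> A) (g : FT n r -> A) :
  cont_hom A n r g -> maps_gens A n r g a ->
  forall f : FT n r, cvA A (Pp A n a (coef f)) (g f).
Proof.
  intros Hg Hb f i eps He.
  set (c := coef f).
  assert (Hc : forall w, ~ Forall (fun i => (i < n)%nat) w -> c w = C0) by exact (proj1 (proj2_sig f)).
  assert (Hgood : forall rho, 0 < rho < r -> exists s, Un_cv (norm_partial n c rho) s)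
    by exact (proj2 (proj2_sig f)).
  pose proof Hg as Hg'. destruct Hg' as [Hadd [_ [_ [_ Hcont]]]].
  destruct (Hcont i) as [rho [K [Hrho HK]]].
  destruct (Hgood rho Hrho) as [s Hs].
  destruct (Hs (eps / (Rabs K + 1))) as [N0 HN0].
  { apply Rdiv_lt_0_compat; auto. pose proof (Rabs_pos K); lra. }
  exists N0. intros N HN.
  set (hR := exist _ _ (R_in_FT n r c Hc N) : FT n r).
  set (hT := exist _ _ (tail_in_FT n r c N Hc Hgood) : FT n r).
  assert (Hf : g f = add A (g hR) (g hT)).
  { apply Hadd. intro w. unfold hR, hT, coef; cbn [proj1_sig]. fold (coef f). fold c.
    destruct (Compare_dec.le_dec (length w) N). rewrite Cadd0r; auto. rewrite Cadd0l; auto. }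
  rewrite (gR n r A a g Hg Hb c Hc N hR) in Hf by (intro; auto).
  rewrite Hf. unfold sub. rewrite opp_add, addA, addN, add0, snN.
  assert (HsT : Un_cv (norm_partial n (coef hT) rho) (s - norm_partial n c rho N)).
  { unfold hT, coef; cbn [proj1_sig]. apply tail_cv; auto. }
  specialize (HK hT _ HsT). specialize (HN0 N HN). unfold Rdist in HN0.
  eapply Rle_lt_trans. apply HK.
  assert (0 <= s - norm_partial n c rho N).
  { pose proof (np_le_lim n c rho s N ltac:(lra) Hs). lra. }
  assert (s - norm_partial n c rho N < eps / (Rabs K + 1)).
  { pose proof (Rle_abs (- (norm_partial n c rho N - s))). rewrite Rabs_Ropp in H0. lra. }
  apply Rle_lt_trans with (Rabs K * (s - norm_partial n c rho N)).
  apply Rmult_le_compat_r; auto. apply Rle_abs.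
  apply Rle_lt_trans with ((Rabs K + 1) * (s - norm_partial n c rho N)).
  apply Rmult_le_compat_r; auto. lra.
  apply Rmult_lt_reg_r with (/ (Rabs K + 1)). apply Rinv_0_lt_compat; pose proof (Rabs_pos K); lra.
  rewrite Rmult_comm, <- Rmult_assoc, Rinv_l, Rmult_1_l. unfold Rdiv in H0. lra.
  pose proof (Rabs_pos K); lra.
Qed.

Theorem proposition6p11 (n : nat) (r : R) (A : AMAlgebra) :
  0 < r ->
  (forall a : nat -> A, strictly_spectrally_contractive A n r a ->
     exists gamma : FT n r -> A,
       cont_hom A n r gamma /\ maps_gens A n r gamma a /\
       (forall gamma' : FT n r -> A,
          cont_hom A n r gamma' -> maps_gens A n r gamma' a ->
          forall f, gamma' f = gamma f)) /\
  (forall (phi : FT n r -> A) (b : nat -> A),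
     cont_hom A n r phi -> maps_gens A n r phi b ->
     strictly_spectrally_contractive A n r b).
Proof.
  intro Hr. split.
  - intros a Ha. exists (gam n r A a). split; [|split].
    + split; [|split; [|split; [|split]]].
      * intros; apply gam_add; auto.
      * intros; apply gam_scal; auto.
      * intros; apply gam_mul; auto.
      * intros; apply gam_one; auto.
      * apply gam_cont; auto.
    + apply gam_gens; auto.
    + intros g Hg Hb f. apply (cvA_unique A (Pp A n a (coef f))).
      apply (g_cv n r A a g Hg Hb). apply gam_spec; auto.
  - intros phi b Hphi Hb. apply (converse_dir n r A phi b); auto.
Qed.
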